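(* Let $\mathbb{T}$ be a time scale and $a,b\in\mathbb{T}$ with $a<b$. If $f:[a,b]^\kappa_{\mathbb{T}}\to\mathbb{R}$ is rd-continuous and positive, then $$\int_a^b f(t)\ln(f(t))\Delta t\geq\left(\int_a^b f(t)\Delta t\right)\ln\left(\frac{1}{b-a}\int_a^b f(t)\Delta t\right),$$ and equality holds if and only if $f$ is constant.
   Context: A time scale $\mathbb{T}$ is a nonempty closed subset of $\mathbb{R}$. $[a,b]_{\mathbb{T}}=[a,b]\cap\mathbb{T}$; $[a,b]^\kappa_{\mathbb{T}}$ equals $[a,b]_{\mathbb{T}}$ with $b$ removed if $b$ is left-scattered, and $[a,b]_{\mathbb{T}}$ otherwise. A function is rd-continuous if it is continuous at right-dense points and has finite left-sided limits at left-dense points. $\int_a^b\cdot\,\Delta t$ denotes the delta integral on $\mathbb{T}$. *)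

(* Defs.v *)
From Stdlib Require Import Reals ClassicalEpsilon.
From Coquelicot Require Import Coquelicot.
Open Scope R_scope.

Definition time_scale (T : R -> Prop) : Prop :=
  (exists x, T x) /\
  (forall x, (forall eps, 0 < eps -> exists y, T y /\ Rabs (y - x) < eps) -> T x).

(* forward jump operator: sigma t = inf {s in T | s > t}, sigma (max T) = max T *)
Definition sigma (T : R -> Prop) (t : R) : R :=
  match Glb_Rbar (fun s => T s /\ t < s) with
  | Finite x => x
  | _ => t
  end.

(* backward jump operator: rho t = sup {s in T | s < t}, rho (min T) = min T *)
Definition rho (T : R -> Prop) (t : R) : R :=
  match Lub_Rbar (fun s => T s /\ s < t) with
  | Finite x => x
  | _ => t
  end.

Definition right_dense T t := sigma T t = t.
Definition left_dense T t := rho T t = t.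

Definition interval_ts (T : R -> Prop) (a b : R) : R -> Prop :=
  fun t => T t /\ a <= t <= b.

Definition kappa (T : R -> Prop) : R -> Prop :=
  fun t => T t /\ ~ ((forall s, T s -> s <= t) /\ ~ left_dense T t).

Definition rd_continuous (T : R -> Prop) (f : R -> R) : Prop :=
  forall t, kappa T t ->
    (right_dense T t ->
       forall eps, 0 < eps -> exists delta, 0 < delta /\
         forall s, kappa T s -> Rabs (s - t) < delta -> Rabs (f s - f t) < eps) /\
    (left_dense T t ->
       exists L, forall eps, 0 < eps -> exists delta, 0 < delta /\
         forall s, kappa T s -> t - delta < s < t -> Rabs (f s - L) < eps).

Definition has_delta_deriv (T : R -> Prop) (F : R -> R) (t c : R) : Prop :=
  forall eps, 0 < eps -> exists delta, 0 < delta /\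
    forall s, T s -> Rabs (s - t) < delta ->
      Rabs (F (sigma T t) - F s - c * (sigma T t - s)) <= eps * Rabs (sigma T t - s).

Definition is_delta_antideriv (T : R -> Prop) (f F : R -> R) : Prop :=
  forall t, kappa T t -> has_delta_deriv T F t (f t).

Definition delta_integral (T : R -> Prop) (f : R -> R) (a b : R) : R :=
  let F := epsilon (inhabits (fun _ : R => 0)) (is_delta_antideriv T f) in
  F b - F a.

(* Main.v *)
Require Import Defs.
From Stdlib Require Import Reals Lra ClassicalEpsilon Classical.
From Coquelicot Require Import Coquelicot.
Open Scope R_scope.

Lemma glb_fin (E : R -> Prop) (m : R) :
  (exists y, E y) -> (forall y, E y -> m <= y) ->
  exists c, Glb_Rbar E = Finite c /\ (forall y, E y -> c <= y) /\
    (forall e, 0 < e -> exists y, E y /\ y < c + e) /\ m <= c.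
Proof.
  intros [y0 Hy0] Hm.
  destruct (Glb_Rbar_correct E) as [Hlb Hg].
  assert (H1 : Rbar_le m (Glb_Rbar E)) by (apply Hg; intros x Hx; simpl; auto).
  assert (H2 : Rbar_le (Glb_Rbar E) y0) by (apply Hlb; auto).
  destruct (Glb_Rbar E) as [c| |] eqn:Ec; simpl in H1, H2; try contradiction.
  exists c; split; [reflexivity|]. split; [|split; [|exact H1]].
  - intros y Hy. specialize (Hlb y Hy). simpl in Hlb. exact Hlb.
  - intros e He. apply NNPP; intro Hn.
    assert (Hb : is_lb_Rbar E (c + e)).
    { intros x Hx. simpl. apply Rnot_lt_le. intro Hl. apply Hn. exists x; auto. }
    specialize (Hg _ Hb). simpl in Hg. lra.
Qed.

Lemma glb_empty (E : R -> Prop) : (forall y, ~ E y) -> Glb_Rbar E = p_infty.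
Proof.
  intros He. destruct (Glb_Rbar_correct E) as [_ Hg].
  assert (H : Rbar_le p_infty (Glb_Rbar E)) by (apply Hg; intros x Hx; exfalso; eapply He; eauto).
  destruct (Glb_Rbar E); simpl in H; tauto.
Qed.

Lemma lub_fin (E : R -> Prop) (m : R) :
  (exists y, E y) -> (forall y, E y -> y <= m) ->
  exists c, Lub_Rbar E = Finite c /\ (forall y, E y -> y <= c) /\
    (forall e, 0 < e -> exists y, E y /\ c - e < y) /\ c <= m.
Proof.
  intros [y0 Hy0] Hm.
  destruct (Lub_Rbar_correct E) as [Hub Hg].
  assert (H1 : Rbar_le (Lub_Rbar E) m) by (apply Hg; intros x Hx; simpl; auto).
  assert (H2 : Rbar_le y0 (Lub_Rbar E)) by (apply Hub; auto).
  destruct (Lub_Rbar E) as [c| |] eqn:Ec; simpl in H1, H2; try contradiction.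
  exists c; split; [reflexivity|]. split; [|split; [|exact H1]].
  - intros y Hy. specialize (Hub y Hy). simpl in Hub. exact Hub.
  - intros e He. apply NNPP; intro Hn.
    assert (Hb : is_ub_Rbar E (c - e)).
    { intros x Hx. simpl. apply Rnot_lt_le. intro Hl. apply Hn. exists x; auto. }
    specialize (Hg _ Hb). simpl in Hg. lra.
Qed.

Lemma lub_empty (E : R -> Prop) : (forall y, ~ E y) -> Lub_Rbar E = m_infty.
Proof.
  intros He. destruct (Lub_Rbar_correct E) as [_ Hg].
  assert (H : Rbar_le (Lub_Rbar E) m_infty) by (apply Hg; intros x Hx; exfalso; eapply He; eauto).
  destruct (Lub_Rbar E); simpl in H; tauto.
Qed.

Section TS.
Variable T : R -> Prop.
Variables a b : R.
Hypothesis HT : time_scale T.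
Hypothesis Ha : T a.
Hypothesis Hb : T b.
Hypothesis Hab : a < b.

Notation I := (interval_ts T a b).

Lemma I_a : I a. Proof. split; auto; lra. Qed.
Lemma I_b : I b. Proof. split; auto; lra. Qed.
Lemma I_le t : I t -> a <= t <= b. Proof. intros [_ H]; exact H. Qed.

Lemma I_closed x : (forall e, 0 < e -> exists y, I y /\ Rabs (y - x) < e) -> I x.
Proof.
  intros H. split.
  - destruct HT as [_ Hc]. apply Hc. intros e He. destruct (H e He) as [y [[Ty _] Hy]]. eauto.
  - split.
    + apply Rnot_lt_le; intro Hl. destruct (H (a - x)) as [y [[_ [Hy1 _]] Hy]]; [lra|].
      apply Rabs_lt_between in Hy. lra.
    + apply Rnot_lt_le; intro Hl. destruct (H (x - b)) as [y [[_ [_ Hy1]] Hy]]; [lra|].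
      apply Rabs_lt_between in Hy. lra.
Qed.

Lemma sig_cases t : I t ->
  ((forall y, ~ (I y /\ t < y)) /\ Defs.sigma I t = t) \/
  (exists c, Defs.sigma I t = c /\ (forall y, I y -> t < y -> c <= y) /\
     (forall e, 0 < e -> exists y, I y /\ t < y /\ y < c + e) /\ t <= c /\ I c).
Proof.
  intros Ht. destruct (classic (exists y, I y /\ t < y)) as [Hne|Hne].
  - right. destruct (glb_fin (fun s => I s /\ t < s) t Hne) as [c [Ec [H1 [H2 H3]]]].
    { intros y [_ Hy]; lra. }
    exists c. unfold Defs.sigma. rewrite Ec. split; [reflexivity|]. split; [intros y Hy Hty; apply H1; auto|].
    split; [intros e He; destruct (H2 e He) as [y [[Iy Ty] Hy]]; eauto|]. split; [exact H3|].
    apply I_closed. intros e He. destruct (H2 e He) as [y [[Iy Ty] Hy]]. exists y; split; auto.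
    assert (c <= y) by (apply H1; auto). rewrite Rabs_right; lra.
  - left. split. { intros y Hy. apply Hne. eauto. }
    unfold Defs.sigma. rewrite glb_empty; auto. intros y Hy; apply Hne; eauto.
Qed.

Lemma sig_ge t : I t -> t <= Defs.sigma I t.
Proof. intros Ht. destruct (sig_cases t Ht) as [[_ E]|[c [E [_ [_ [H _]]]]]]; lra. Qed.

Lemma sig_I t : I t -> I (Defs.sigma I t).
Proof. intros Ht. destruct (sig_cases t Ht) as [[_ E]|[c [E [_ [_ [_ H]]]]]]; rewrite E; auto. Qed.

Lemma sig_next t y : I t -> I y -> t < y -> Defs.sigma I t <= y.
Proof.
  intros Ht Iy Hty. destruct (sig_cases t Ht) as [[H _]|[c [E [H _]]]].
  - exfalso; eapply H; eauto.
  - rewrite E; auto.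
Qed.

Lemma sig_dense t : I t -> Defs.sigma I t = t -> t < b ->
  forall d, 0 < d -> exists y, I y /\ t < y /\ y < t + d.
Proof.
  intros Ht Es Htb d Hd. destruct (sig_cases t Ht) as [[H _]|[c [E [_ [H _]]]]].
  - exfalso; apply (H b). split; [apply I_b| auto].
  - rewrite Es in E. subst c. destruct (H d Hd) as [y [Iy [H1 H2]]]. eauto.
Qed.

Lemma sig_b : Defs.sigma I b = b.
Proof.
  destruct (sig_cases b I_b) as [[_ E]|[c [E [_ [H _]]]]]; auto.
  exfalso. destruct (H 1) as [y [Iy [H1 _]]]; [lra|]. apply I_le in Iy. lra.
Qed.

Lemma sig_lt_b t : I t -> t < Defs.sigma I t -> t < b.
Proof. intros Ht H. destruct (I_le t Ht) as [_ [H1|H1]]; auto. subst. rewrite sig_b in H. lra. Qed.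

Lemma rho_cases t : I t ->
  ((forall y, ~ (I y /\ y < t)) /\ Defs.rho I t = t) \/
  (exists c, Defs.rho I t = c /\ (forall y, I y -> y < t -> y <= c) /\
     (forall e, 0 < e -> exists y, I y /\ y < t /\ c - e < y) /\ c <= t /\ I c).
Proof.
  intros Ht. destruct (classic (exists y, I y /\ y < t)) as [Hne|Hne].
  - right. destruct (lub_fin (fun s => I s /\ s < t) t Hne) as [c [Ec [H1 [H2 H3]]]].
    { intros y [_ Hy]; lra. }
    exists c. unfold Defs.rho. rewrite Ec. split; [reflexivity|]. split; [intros y Hy Hty; apply H1; auto|].
    split; [intros e He; destruct (H2 e He) as [y [[Iy Ty] Hy]]; eauto|]. split; [exact H3|].
    apply I_closed. intros e He. destruct (H2 e He) as [y [[Iy Ty] Hy]]. exists y; split; auto.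
    assert (y <= c) by (apply H1; auto). rewrite Rabs_left1; lra.
  - left. split. { intros y Hy. apply Hne. eauto. }
    unfold Defs.rho. rewrite lub_empty; auto. intros y Hy; apply Hne; eauto.
Qed.

Lemma rho_le t : I t -> Defs.rho I t <= t.
Proof. intros Ht. destruct (rho_cases t Ht) as [[_ E]|[c [E [_ [_ [H _]]]]]]; lra. Qed.

Lemma rho_I t : I t -> I (Defs.rho I t).
Proof. intros Ht. destruct (rho_cases t Ht) as [[_ E]|[c [E [_ [_ [_ H]]]]]]; rewrite E; auto. Qed.

Lemma rho_prev t y : I t -> I y -> y < t -> y <= Defs.rho I t.
Proof.
  intros Ht Iy Hty. destruct (rho_cases t Ht) as [[H _]|[c [E [H _]]]].
  - exfalso; eapply H; eauto.
  - rewrite E; auto.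
Qed.

Lemma rho_dense t : I t -> Defs.rho I t = t -> a < t ->
  forall u, u < t -> exists y, I y /\ u < y /\ y < t.
Proof.
  intros Ht Es Hat u Hu. destruct (rho_cases t Ht) as [[H _]|[c [E [_ [H _]]]]].
  - exfalso; apply (H a). split; [apply I_a| auto].
  - rewrite Es in E. subst c. destruct (H (t - u)) as [y [Iy [H1 H2]]]; [lra|]. exists y; split; auto; lra.
Qed.

Lemma sig_rho t : I t -> Defs.rho I t < t -> Defs.sigma I (Defs.rho I t) = t.
Proof.
  intros Ht Hr. set (p := Defs.rho I t) in *. assert (Ip : I p) by apply rho_I, Ht.
  assert (H1 : Defs.sigma I p <= t) by (apply sig_next; auto).
  destruct (Req_dec (Defs.sigma I p) p) as [E|E].
  - exfalso. assert (p < b) by (destruct (I_le t Ht); lra).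
    destruct (sig_dense p Ip E H (t - p)) as [y [Iy [Hy1 Hy2]]]; [lra|].
    assert (y <= p) by (apply rho_prev; auto; lra). lra.
  - assert (H2 := sig_ge p Ip). destruct (Rle_lt_or_eq_dec _ _ H1) as [H3|H3]; auto.
    exfalso. assert (Defs.sigma I p <= p) by (apply rho_prev; auto; apply sig_I; auto). lra.
Qed.

Lemma kappa_lt t : I t -> t < b -> kappa I t.
Proof. intros Ht Htb. split; auto. intros [H _]. specialize (H b I_b). lra. Qed.

Lemma kappa_ld t : I t -> Defs.rho I t = t -> kappa I t.
Proof. intros Ht Hr. split; auto. intros [_ H]. apply H. exact Hr. Qed.

Lemma kappa_I t : kappa I t -> I t.
Proof. intros [H _]; exact H. Qed.

Lemma kappa_cases t : kappa I t -> t < b \/ (t = b /\ Defs.rho I t = t).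
Proof.
  intros [Ht Hk]. destruct (I_le t Ht) as [_ [H|H]]; [left; auto|right; split; auto].
  apply NNPP; intro Hn. apply Hk. split; auto. intros s Hs. apply I_le in Hs. lra.
Qed.


Notation D := (has_delta_deriv I).

Lemma small_zero x K : 0 <= K -> (forall e, 0 < e -> Rabs x <= e * K) -> x = 0.
Proof.
  intros HK H. destruct (Req_dec x 0) as [|Hx]; auto. exfalso.
  assert (Hp : 0 < Rabs x) by (apply Rabs_pos_lt; auto).
  specialize (H (Rabs x / (2 * (K + 1)))).
  assert (Hq : 0 < Rabs x / (2 * (K + 1))) by (apply Rdiv_lt_0_compat; lra).
  specialize (H Hq).
  assert (E : Rabs x / (2 * (K + 1)) * K * (2 * (K + 1)) = Rabs x * K) by (field; lra).
  assert (Rabs x * (2 * (K + 1)) <= Rabs x / (2 * (K + 1)) * K * (2 * (K + 1)))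
    by (apply Rmult_le_compat_r; lra).
  nra.
Qed.

Lemma deriv_rs H t c : I t -> D H t c ->
  H (Defs.sigma I t) - H t = c * (Defs.sigma I t - t).
Proof.
  intros Ht Hd. assert (Hg := sig_ge t Ht).
  apply Rminus_diag_uniq. apply (small_zero _ (Defs.sigma I t - t)); [lra|].
  intros e He. destruct (Hd e He) as [d [Hdp Hdd]].
  specialize (Hdd t Ht). rewrite Rminus_diag, Rabs_R0 in Hdd. specialize (Hdd Hdp).
  rewrite (Rabs_right (Defs.sigma I t - t)) in Hdd by lra.
  replace (H (Defs.sigma I t) - H t - c * (Defs.sigma I t - t) - 0) with
    (H (Defs.sigma I t) - H t - c * (Defs.sigma I t - t)) by ring. exact Hdd.
Qed.

Lemma deriv_cont H t c : I t -> D H t c ->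
  forall eta, 0 < eta -> exists d, 0 < d /\ forall s, I s -> Rabs (s - t) < d -> Rabs (H s - H t) <= eta.
Proof.
  intros Ht Hd eta He. set (mu := Defs.sigma I t - t). assert (Hmu : 0 <= mu) by (generalize (sig_ge t Ht); unfold mu; lra).
  set (e' := eta / (2 * (2 * mu + 2))).
  assert (He' : 0 < e') by (unfold e'; apply Rdiv_lt_0_compat; lra).
  assert (Hee : e' * (2 * mu + 2) = eta / 2) by (unfold e'; field; lra).
  destruct (Hd e' He') as [d1 [Hd1 Hdd]].
  set (k := eta / (2 * (Rabs c + 1))).
  assert (Hk : 0 < k) by (unfold k; apply Rdiv_lt_0_compat; generalize (Rabs_pos c); lra).
  assert (Hkk : k * (Rabs c + 1) = eta / 2) by (unfold k; field; generalize (Rabs_pos c); lra).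
  exists (Rmin d1 (Rmin 1 k)). split; [repeat apply Rmin_pos; lra|].
  intros s Is Hs.
  assert (Hs1 : Rabs (s - t) < d1) by (eapply Rlt_le_trans; [exact Hs| apply Rmin_l]).
  assert (Hs2 : Rabs (s - t) < 1) by (eapply Rlt_le_trans; [exact Hs| eapply Rle_trans; [apply Rmin_r| apply Rmin_l]]).
  assert (Hs3 : Rabs (s - t) < k) by (eapply Rlt_le_trans; [exact Hs| eapply Rle_trans; [apply Rmin_r| apply Rmin_r]]).
  assert (A1 := Hdd s Is Hs1).
  assert (A2 := Hdd t Ht). rewrite Rminus_diag, Rabs_R0 in A2. specialize (A2 Hd1).
  fold mu in A2. replace (Defs.sigma I t - t) with mu in A2 by reflexivity.
  rewrite (Rabs_right mu) in A2 by lra.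
  assert (B : Rabs (Defs.sigma I t - s) <= mu + 1).
  { replace (Defs.sigma I t - s) with (mu + (t - s)) by (unfold mu; ring).
    eapply Rle_trans; [apply Rabs_triang|]. rewrite Rabs_right by lra. rewrite Rabs_minus_sym. lra. }
  assert (C : Rabs c * Rabs (s - t) <= Rabs c * k) by (apply Rmult_le_compat_l; [apply Rabs_pos| lra]).
  replace (H s - H t) with (- (H (Defs.sigma I t) - H s - c * (Defs.sigma I t - s))
     + (H (Defs.sigma I t) - H t - c * mu) + c * (s - t)) by (unfold mu; ring).
  eapply Rle_trans; [apply Rabs_triang|]. eapply Rle_trans; [apply Rplus_le_compat_r, Rabs_triang|].
  rewrite Rabs_Ropp, Rabs_mult.
  assert (e' * Rabs (Defs.sigma I t - s) <= e' * (mu + 1)) by (apply Rmult_le_compat_l; lra).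
  generalize (Rabs_pos c); nra.
Qed.

Lemma deriv_lin F G t c1 c2 al be : D F t c1 -> D G t c2 ->
  D (fun x => al * F x + be * G x) t (al * c1 + be * c2).
Proof.
  intros H1 H2 e He. set (e' := e / (Rabs al + Rabs be + 1)).
  assert (Hp : 0 < Rabs al + Rabs be + 1) by (generalize (Rabs_pos al) (Rabs_pos be); lra).
  assert (He' : 0 < e') by (unfold e'; apply Rdiv_lt_0_compat; lra).
  destruct (H1 e' He') as [d1 [Hd1 K1]]. destruct (H2 e' He') as [d2 [Hd2 K2]].
  exists (Rmin d1 d2). split; [apply Rmin_pos; lra|]. intros s Is Hs.
  assert (L1 := K1 s Is (Rlt_le_trans _ _ _ Hs (Rmin_l _ _))).
  assert (L2 := K2 s Is (Rlt_le_trans _ _ _ Hs (Rmin_r _ _))).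
  set (z := Rabs (Defs.sigma I t - s)) in *.
  replace (al * F (Defs.sigma I t) + be * G (Defs.sigma I t) - (al * F s + be * G s) -
     (al * c1 + be * c2) * (Defs.sigma I t - s)) with
    (al * (F (Defs.sigma I t) - F s - c1 * (Defs.sigma I t - s)) +
     be * (G (Defs.sigma I t) - G s - c2 * (Defs.sigma I t - s))) by ring.
  eapply Rle_trans; [apply Rabs_triang|]. rewrite !Rabs_mult.
  assert (Hz : 0 <= z) by apply Rabs_pos.
  assert (Rabs al * Rabs (F (Defs.sigma I t) - F s - c1 * (Defs.sigma I t - s)) <= Rabs al * (e' * z))
    by (apply Rmult_le_compat_l; [apply Rabs_pos|exact L1]).
  assert (Rabs be * Rabs (G (Defs.sigma I t) - G s - c2 * (Defs.sigma I t - s)) <= Rabs be * (e' * z))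
    by (apply Rmult_le_compat_l; [apply Rabs_pos|exact L2]).
  assert (e' * (Rabs al + Rabs be + 1) = e) by (unfold e'; field; lra).
  assert (0 <= e' * z) by (apply Rmult_le_pos; lra).
  generalize (Rabs_pos al) (Rabs_pos be); nra.
Qed.

Lemma deriv_id t : D (fun x => x) t 1.
Proof.
  intros e He. exists 1. split; [lra|]. intros s _ _.
  replace (Defs.sigma I t - s - 1 * (Defs.sigma I t - s)) with 0 by ring.
  rewrite Rabs_R0. apply Rmult_le_pos; [lra|apply Rabs_pos].
Qed.

Section Mono.
Variables (H h : R -> R).
Hypothesis Hd : forall t, kappa I t -> D H t (h t).
Hypothesis Hh : forall t, kappa I t -> 0 <= h t.

Lemma mono_eps s : I s -> forall e, 0 < e -> forall t, I t -> s <= t -> H s - e * (t - s) <= H t.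
Proof.
  intros Is e He. set (P := fun t => H s - e * (t - s) <= H t).
  apply NNPP; intro Hn.
  assert (Hex : exists t, I t /\ s <= t /\ ~ P t).
  { apply NNPP; intro H0. apply Hn. intros t It Hst. apply NNPP; intro H1. apply H0. exists t; auto. }
  destruct (glb_fin (fun t => I t /\ s <= t /\ ~ P t) s Hex) as [c [_ [Hlb [Happ Hsc]]]].
  { intros y [_ [Hy _]]; exact Hy. }
  assert (Ic : I c).
  { apply I_closed. intros e0 He0. destruct (Happ e0 He0) as [y [Sy Hy]].
    exists y; split; [apply Sy|]. assert (c <= y) by (apply Hlb; auto). rewrite Rabs_right; lra. }
  assert (PS : forall y, I y -> s <= y -> y < c -> P y).
  { intros y Iy Hsy Hyc. apply NNPP; intro Hny. assert (c <= y) by (apply Hlb; tauto). lra. }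
  destruct (classic (P c)) as [Pc|nPc].
  -
    assert (Hcb : c < b).
    { destruct (I_le c Ic) as [_ [Hcb|Hcb]]; auto. exfalso.
      destruct Hex as [t0 [It0 [Ht0 Hnp]]]. assert (c <= t0) by (apply Hlb; tauto).
      apply I_le in It0. assert (t0 = c) by lra. subst. auto. }
    destruct (Req_dec (Defs.sigma I c) c) as [Es|Es].
    + destruct (Hd c (kappa_lt c Ic Hcb) e He) as [d [Hdp Hdd]].
      destruct (Happ d Hdp) as [y [[Iy [Hsy nPy]] Hy]].
      assert (Hcy : c <= y) by (apply Hlb; tauto).
      assert (Hcy' : c < y) by (destruct Hcy as [|E]; auto; subst; contradiction).
      assert (Hdy : Rabs (y - c) < d) by (rewrite Rabs_right; lra).
      specialize (Hdd y Iy Hdy). rewrite Es in Hdd.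
      rewrite (Rabs_left (c - y)) in Hdd by lra. apply Rabs_le_between in Hdd.
      apply nPy. unfold P in Pc |- *. assert (0 <= h c) by (apply Hh, kappa_lt; auto).
      nra.
    + assert (Hg := sig_ge c Ic).
      destruct (Happ (Defs.sigma I c - c)) as [y [[Iy [Hsy nPy]] Hy]]; [lra|].
      assert (Hcy : c <= y) by (apply Hlb; tauto).
      assert (Hcy' : c < y) by (destruct Hcy as [|E]; auto; subst; contradiction).
      assert (Defs.sigma I c <= y) by (apply sig_next; auto). lra.
  - assert (Hsc' : s < c) by (destruct Hsc as [|E]; auto; subst; unfold P in nPc; lra).
    destruct (Req_dec (Defs.rho I c) c) as [Er|Er].
    + assert (Kc : kappa I c) by (apply kappa_ld; auto).
      apply nPc. unfold P.
      apply Rnot_lt_le; intro Hlt.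
      set (eta := (H s - e * (c - s) - H c) / 2).
      assert (Heta : 0 < eta) by (unfold eta; lra).
      destruct (deriv_cont H c (h c) Ic (Hd c Kc) eta Heta) as [d [Hdp Hdd]].
      destruct (rho_dense c Ic Er (Rle_lt_trans _ _ _ (proj1 (I_le s Is)) Hsc') (Rmax s (c - d)))
        as [y [Iy [Hy1 Hy2]]].
      { apply Rmax_lub_lt; lra. }
      assert (Py : P y) by (apply PS; auto; apply Rlt_le, Rle_lt_trans with (Rmax s (c - d)); auto; apply Rmax_l).
      assert (Hyd : Rabs (y - c) < d).
      { rewrite Rabs_left by lra. assert (c - d <= Rmax s (c - d)) by apply Rmax_r. lra. }
      specialize (Hdd y Iy Hyd). apply Rabs_le_between in Hdd. unfold P in Py.
      assert (s <= Rmax s (c - d)) by apply Rmax_l.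
      unfold eta in Hdd. nra.
    + assert (Hr := rho_le c Ic). set (p := Defs.rho I c) in *.
      assert (Hrp : p < c) by lra.
      assert (Ip : I p) by (apply rho_I; auto).
      assert (Hsp : s <= p) by (apply rho_prev; auto).
      assert (Pp : P p) by (apply PS; auto).
      assert (Kp : kappa I p) by (apply kappa_lt; auto; destruct (I_le c Ic); lra).
      assert (E := deriv_rs H p (h p) Ip (Hd p Kp)).
      unfold p in E. rewrite sig_rho in E by auto. fold p in E.
      assert (0 <= h p) by (apply Hh; auto).
      apply nPc. unfold P in Pp |- *. nra.
Qed.

Lemma mono s t : I s -> I t -> s <= t -> H s <= H t.
Proof.
  intros Is It Hst. apply Rnot_lt_le; intro Hl.
  set (e := (H s - H t) / (2 * (t - s + 1))).
  assert (He : 0 < e) by (unfold e; apply Rdiv_lt_0_compat; lra).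
  assert (K := mono_eps s Is e He t It Hst).
  assert (Ee : e * (2 * (t - s + 1)) = H s - H t) by (unfold e; field; lra).
  nra.
Qed.

Lemma flat_zero : H a = H b -> forall t, kappa I t -> h t = 0.
Proof.
  intros Eab t Kt. assert (It := kappa_I t Kt). destruct (Hh t Kt) as [Hp|]; auto. exfalso.
  assert (Ma : forall y, I y -> H y = H a).
  { intros y Iy. apply Rle_antisym.
    - rewrite Eab. apply mono; auto; [apply I_b| apply (I_le y Iy)].
    - apply mono; auto; [apply I_a| apply (I_le y Iy)]. }
  destruct (Req_dec (Defs.sigma I t) t) as [Es|Es].
  - destruct (Hd t Kt (h t / 2)) as [d [Hdp Hdd]]; [lra|].
    destruct (kappa_cases t Kt) as [Htb|[Htb Er]].
    + destruct (sig_dense t It Es Htb d Hdp) as [y [Iy [Hy1 Hy2]]].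
      assert (Hdy : Rabs (y - t) < d) by (rewrite Rabs_right; lra).
      specialize (Hdd y Iy Hdy). rewrite Es, (Ma y Iy), (Ma t It) in Hdd.
      rewrite (Rabs_left (t - y)) in Hdd by lra. apply Rabs_le_between in Hdd. nra.
    + destruct (rho_dense t It Er (Rlt_le_trans _ _ _ Hab (Req_le _ _ (eq_sym Htb))) (t - d)) as [y [Iy [Hy1 Hy2]]]; [lra|].
      assert (Hdy : Rabs (y - t) < d) by (rewrite Rabs_left; lra).
      specialize (Hdd y Iy Hdy). rewrite Es, (Ma y Iy), (Ma t It) in Hdd.
      rewrite (Rabs_right (t - y)) in Hdd by lra. apply Rabs_le_between in Hdd. nra.
  - assert (E := deriv_rs H t (h t) It (Hd t Kt)).
    rewrite (Ma t It), (Ma _ (sig_I t It)) in E. assert (Hg := sig_ge t It). nra.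
Qed.

End Mono.

Definition cont (g : R -> R) z := forall e, 0 < e -> exists d, 0 < d /\ forall x, Rabs (x - z) < d -> Rabs (g x - g z) <= e.
Definition RC (g : R -> R) z := forall e, 0 < e -> exists d, 0 < d /\ forall x, z <= x < z + d -> Rabs (g x - g z) <= e.
Definition LC (g : R -> R) z := forall e, 0 < e -> exists d, 0 < d /\ forall x, z - d < x <= z -> Rabs (g x - g z) <= e.

Lemma cont_pt g z : cont g z -> continuity_pt g z.
Proof.
  intros H eps Heps. destruct (H (eps / 2)) as [d [Hd Hx]]; [lra|]. exists d. split; [lra|].
  intros x [_ Hxd]. simpl in *. unfold R_dist in *. specialize (Hx x Hxd). lra.
Qed.

Lemma pt_cont g z : continuity_pt g z -> cont g z.
Proof.
  intros H e He. destruct (H e He) as [d [Hd Hx]]. exists d. split; [lra|].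
  intros x Hxd. destruct (Req_dec x z) as [E|E]. { subst. rewrite Rminus_diag, Rabs_R0. lra. }
  assert (K := Hx x). simpl in K. unfold R_dist in K. apply Rlt_le, K. split; auto.
  split; [constructor|auto].
Qed.

Lemma LC_RC_cont g z : LC g z -> RC g z -> cont g z.
Proof.
  intros HL HR e He. destruct (HL e He) as [d1 [Hd1 K1]]. destruct (HR e He) as [d2 [Hd2 K2]].
  exists (Rmin d1 d2). split; [apply Rmin_pos; auto|]. intros x Hx.
  assert (Rmin d1 d2 <= d1) by apply Rmin_l. assert (Rmin d1 d2 <= d2) by apply Rmin_r.
  apply Rabs_lt_between in Hx. destruct (Rle_dec z x).
  - apply K2; lra.
  - apply K1; lra.
Qed.

Lemma RC_of g p z d : 0 < d -> (forall x, z <= x < z + d -> g x = p x) -> cont p z -> RC g z.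
Proof.
  intros Hd Heq Hp e He. destruct (Hp e He) as [d1 [Hd1 K]]. exists (Rmin d d1). split; [apply Rmin_pos; auto|].
  intros x Hx. assert (Rmin d d1 <= d) by apply Rmin_l. assert (Rmin d d1 <= d1) by apply Rmin_r.
  rewrite (Heq x) by lra. rewrite (Heq z) by lra. apply K. rewrite Rabs_right; lra.
Qed.

Lemma LC_of g p z d : 0 < d -> (forall x, z - d < x <= z -> g x = p x) -> cont p z -> LC g z.
Proof.
  intros Hd Heq Hp e He. destruct (Hp e He) as [d1 [Hd1 K]]. exists (Rmin d d1). split; [apply Rmin_pos; auto|].
  intros x Hx. assert (Rmin d d1 <= d) by apply Rmin_l. assert (Rmin d d1 <= d1) by apply Rmin_r.
  rewrite (Heq x) by lra. rewrite (Heq z) by lra. apply K. rewrite Rabs_left1; lra.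
Qed.

Lemma div_unit p q : 0 <= p -> p <= q -> 0 < q -> 0 <= p / q <= 1.
Proof.
  intros H1 H2 H3. split; [apply Rdiv_le_0_compat; lra|].
  apply Rmult_le_reg_r with q; auto. unfold Rdiv. rewrite Rmult_assoc, Rinv_l by lra. lra.
Qed.

Lemma gap_bound A B F c th e : 0 <= th <= 1 -> Rabs (A - c) <= e -> Rabs (B - c) <= e -> Rabs (F - c) <= e ->
  Rabs (A + (B - A) * th + 6 * (F - (A + B) / 2) * th * (1 - th) - c) <= 4 * e.
Proof.
  intros Hth HA HB HF. apply Rabs_le_between in HA. apply Rabs_le_between in HB. apply Rabs_le_between in HF.
  set (al := A - c) in *. set (be := B - c) in *. set (ph := F - c) in *.
  replace (A + (B - A) * th + 6 * (F - (A + B) / 2) * th * (1 - th) - c) with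
    ((1 - th) * al + th * be + 6 * (th * (1 - th)) * (ph - (al + be) / 2)) by (unfold al, be, ph; field).
  set (P := th * (1 - th)). assert (HP : 0 <= P <= 1/4) by (unfold P; destruct Hth; split; [apply Rmult_le_pos; lra| generalize (Rle_0_sqr (th - 1/2)); unfold Rsqr; nra]).
  assert (Hq : Rabs (ph - (al + be) / 2) <= 2 * e) by (apply Rabs_le; lra).
  apply Rabs_le_between in Hq.
  apply Rabs_le; split; nra.
Qed.

Section Constr.
Variable f : R -> R.
Hypothesis Hrd : rd_continuous I f.

Definition Lprop t L := forall eps, 0 < eps -> exists delta, 0 < delta /\
  forall s, kappa I s -> t - delta < s < t -> Rabs (f s - L) < eps.
Definition Lfun t := epsilon (inhabits 0) (Lprop t).

Lemma L_spec t : kappa I t -> Defs.rho I t = t -> Lprop t (Lfun t).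
Proof. intros Kt Er. unfold Lfun. apply epsilon_spec. destruct (Hrd t Kt) as [_ H]. apply H. exact Er. Qed.

Definition vf t := if Req_dec_T (Defs.sigma I t) t then f t else
  if excluded_middle_informative (Defs.rho I t = t /\ a < t) then Lfun t else f t.

Definition gapf u x := let w := Defs.sigma I u in let th := (x - u) / (w - u) in
  let A := vf u in let B := vf w in A + (B - A) * th + 6 * (f u - (A + B) / 2) * th * (1 - th).

Definition rr x := match Lub_Rbar (fun s => I s /\ s <= x) with Finite y => y | _ => x end.

Definition g x := if Rlt_dec x a then vf a else if Rlt_dec b x then vf b else
  if excluded_middle_informative (I x) then vf x else gapf (rr x) x.

Lemma g_I x : I x -> g x = vf x.
Proof.
  intros Ix. destruct (I_le x Ix). unfold g.
  destruct (Rlt_dec x a); [lra|]. destruct (Rlt_dec b x); [lra|].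
  destruct (excluded_middle_informative (I x)); tauto.
Qed.

Lemma g_gapx x : a <= x <= b -> ~ I x -> g x = gapf (rr x) x.
Proof.
  intros Hx nIx. unfold g.
  destruct (Rlt_dec x a); [lra|]. destruct (Rlt_dec b x); [lra|].
  destruct (excluded_middle_informative (I x)); tauto.
Qed.

Lemma gap_struct x : a <= x <= b -> ~ I x ->
  I (rr x) /\ rr x < x /\ x < Defs.sigma I (rr x) /\ (forall y, I y -> y <= x -> y <= rr x).
Proof.
  intros Hx nIx.
  destruct (lub_fin (fun s => I s /\ s <= x) x) as [c [Ec [Hub [Happ Hcx]]]].
  { exists a. split; [apply I_a| lra]. } { intros y [_ Hy]; auto. }
  unfold rr. rewrite Ec.
  assert (Ic : I c).
  { apply I_closed. intros e0 He0. destruct (Happ e0 He0) as [y [[Iy Hyx] Hy]]. exists y; split; auto.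
    assert (y <= c) by (apply Hub; auto). rewrite Rabs_left1; lra. }
  assert (Hcx' : c < x) by (destruct Hcx as [|E]; auto; subst; contradiction).
  assert (Hbx : x < b) by (destruct Hx as [_ [|E]]; auto; subst; exfalso; apply nIx, I_b).
  split; [auto|]. split; [auto|]. split; [|intros y Iy Hy; apply Hub; auto].
  destruct (sig_cases c Ic) as [[Hn _]|[c0 [E [Hlb [Happ2 [Hc0 Ic0]]]]]].
  - exfalso. apply (Hn b). split; [apply I_b| lra].
  - rewrite E. assert (x <= c0).
    { apply Rnot_lt_le; intro Hl. destruct (Happ2 (x - c0)) as [y [Iy [Hy1 Hy2]]]; [lra|].
      assert (y <= c) by (apply Hub; split; auto; lra). lra. }
    destruct H as [|E2]; auto. subst. contradiction.
Qed.

Lemma rr_eq u x : I u -> u <= x < Defs.sigma I u -> rr x = u.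
Proof.
  intros Iu Hx.
  destruct (lub_fin (fun s => I s /\ s <= x) x) as [c [Ec [Hub [Happ Hcx]]]].
  { exists u. split; auto; lra. } { intros y [_ Hy]; auto. }
  unfold rr. rewrite Ec. apply Rle_antisym.
  - apply Rnot_lt_le; intro Hl. destruct (Happ (c - u)) as [y [[Iy Hyx] Hy]]; [lra|].
    assert (Defs.sigma I u <= y) by (apply sig_next; auto; lra). lra.
  - apply Hub. split; auto; lra.
Qed.

Lemma gapf_u u : u < Defs.sigma I u -> gapf u u = vf u.
Proof. intros H. unfold gapf. cbv zeta. unfold Rdiv. rewrite Rminus_diag. ring. Qed.

Lemma gapf_w u : u < Defs.sigma I u -> gapf u (Defs.sigma I u) = vf (Defs.sigma I u).
Proof. intros H. unfold gapf. cbv zeta. rewrite Rdiv_diag by lra. ring. Qed.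

Lemma g_gap u x : I u -> u < Defs.sigma I u -> u <= x <= Defs.sigma I u -> g x = gapf u x.
Proof.
  intros Iu Hu Hx. destruct (Req_dec x u) as [E|E].
  { subst. rewrite g_I, gapf_u; auto. }
  destruct (Req_dec x (Defs.sigma I u)) as [E2|E2].
  { subst. rewrite g_I, gapf_w; auto. apply sig_I; auto. }
  assert (nIx : ~ I x).
  { intros Ix. assert (Defs.sigma I u <= x) by (apply sig_next; auto; lra). lra. }
  assert (Isu := sig_I u Iu). destruct (I_le u Iu). destruct (I_le _ Isu).
  rewrite g_gapx by (auto; lra). rewrite rr_eq with (u := u); auto. lra.
Qed.

Lemma gapf_cont u : u < Defs.sigma I u -> forall x, cont (gapf u) x.
Proof.
  intros Hu x. apply pt_cont.
  assert (Hc : continuous (gapf u) x).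
  { apply (@ex_derive_continuous R_AbsRing R_NormedModule). unfold gapf. cbv zeta. auto_derive. lra. }
  apply continuity_pt_filterlim. exact Hc.
Qed.

Lemma gapf_bound u x c e : u < Defs.sigma I u -> u <= x <= Defs.sigma I u ->
  Rabs (vf u - c) <= e -> Rabs (vf (Defs.sigma I u) - c) <= e -> Rabs (f u - c) <= e ->
  Rabs (gapf u x - c) <= 4 * e.
Proof.
  intros Hu Hx H1 H2 H3. unfold gapf. cbv zeta. apply gap_bound; auto.
  apply div_unit; lra.
Qed.

Lemma vclose lo hi lam e : a <= lo -> hi <= b -> 0 < e ->
  (forall s, kappa I s -> lo < s < hi -> Rabs (f s - lam) < e) ->
  forall y, I y -> lo < y < hi -> Rabs (vf y - lam) <= 2 * e.
Proof.
  intros Hlo Hhi He Hf y Iy Hy. assert (Ky : kappa I y) by (apply kappa_lt; auto; lra).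
  unfold vf. destruct (Req_dec_T (Defs.sigma I y) y).
  { apply Rlt_le. eapply Rlt_le_trans; [apply Hf; auto|lra]. }
  destruct (excluded_middle_informative (Defs.rho I y = y /\ a < y)) as [[Er Hay]|].
  - destruct (L_spec y Ky Er e He) as [dy [Hdy Ky2]].
    destruct (rho_dense y Iy Er Hay (Rmax lo (y - dy))) as [s [Is [Hs1 Hs2]]].
    { apply Rmax_lub_lt; lra. }
    assert (lo <= Rmax lo (y - dy)) by apply Rmax_l. assert (y - dy <= Rmax lo (y - dy)) by apply Rmax_r.
    assert (Ks : kappa I s) by (apply kappa_lt; auto; lra).
    assert (A1 := Hf s Ks (conj (Rle_lt_trans _ _ _ H Hs1) (Rlt_trans _ _ _ Hs2 (proj2 Hy)))).
    assert (A2 := Ky2 s Ks (conj (Rle_lt_trans _ _ _ H0 Hs1) Hs2)).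
    replace (Lfun y - lam) with ((f s - lam) - (f s - Lfun y)) by ring.
    eapply Rle_trans; [apply Rabs_triang|]. rewrite Rabs_Ropp. lra.
  - apply Rlt_le. eapply Rlt_le_trans; [apply Hf; auto|lra].
Qed.

Lemma vf_rd t : Defs.sigma I t = t -> vf t = f t.
Proof. intros E. unfold vf. destruct (Req_dec_T (Defs.sigma I t) t); tauto. Qed.

Lemma RC_rd t : I t -> t < b -> Defs.sigma I t = t -> RC g t.
Proof.
  intros It Htb Es e He. set (e' := e / 8). assert (He' : 0 < e') by (unfold e'; lra).
  assert (Kt := kappa_lt t It Htb).
  destruct (Hrd t Kt) as [Hr _]. destruct (Hr Es e' He') as [d [Hd Kd]].
  set (hi := Rmin (t + d) b).
  assert (Hhi1 : hi <= t + d) by apply Rmin_l. assert (Hhi2 : hi <= b) by apply Rmin_r.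
  assert (Hthi : t < hi) by (apply Rmin_glb_lt; lra).
  assert (VC : forall y, I y -> t <= y < hi -> Rabs (vf y - f t) <= 2 * e').
  { intros y Iy [[Hy|Hy] Hy2].
    - apply (vclose t hi (f t) e'); auto; try lra. apply I_le; auto.
      intros s Ks Hs. apply Kd; auto. rewrite Rabs_right; lra.
    - subst. rewrite vf_rd by auto. rewrite Rminus_diag, Rabs_R0. lra. }
  destruct (sig_dense t It Es Htb (hi - t)) as [s1 [Is1 [Hs1 Hs2]]]; [lra|].
  exists (s1 - t). split; [lra|]. intros x Hx.
  rewrite (g_I t It), vf_rd by auto.
  destruct (classic (I x)) as [Ix|nIx].
  - rewrite g_I by auto. eapply Rle_trans; [apply VC; auto; lra| unfold e'; lra].
  - assert (Hxab : a <= x <= b) by (destruct (I_le t It); lra).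
    destruct (gap_struct x Hxab nIx) as [Iu [Hux [Hxs Hmax]]].
    set (u := rr x) in *.
    assert (Htu : t <= u) by (apply Hmax; auto; lra).
    assert (Hsu : Defs.sigma I u <= s1) by (apply sig_next; auto; lra).
    rewrite g_gapx by auto. fold u.
    replace e with (4 * (2 * e')) by (unfold e'; lra).
    apply gapf_bound; [lra|lra| | |].
    + apply VC; auto; lra.
    + apply VC; [apply sig_I; auto| lra].
    + apply Rlt_le, Rlt_le_trans with e'; [|lra]. apply Kd; [apply kappa_lt; auto; lra|].
      rewrite Rabs_right; lra.
Qed.

Lemma LC_ld t : I t -> a < t -> Defs.rho I t = t -> LC g t.
Proof.
  intros It Hat Er e He. set (e' := e / 8). assert (He' : 0 < e') by (unfold e'; lra).
  assert (Kt := kappa_ld t It Er).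
  assert (Hlam : exists d, 0 < d /\ forall s, kappa I s -> t - d < s < t -> Rabs (f s - vf t) < e').
  { destruct (Req_dec_T (Defs.sigma I t) t) as [Es|Es].
    - rewrite vf_rd by auto. destruct (Hrd t Kt) as [Hr _]. destruct (Hr Es e' He') as [d [Hd Kd]].
      exists d. split; auto. intros s Ks Hs. apply Kd; auto. rewrite Rabs_left; lra.
    - assert (vf t = Lfun t).
      { unfold vf. destruct (Req_dec_T (Defs.sigma I t) t); [contradiction|].
        destruct (excluded_middle_informative (Defs.rho I t = t /\ a < t)); tauto. }
      rewrite H. apply (L_spec t Kt Er e' He'). }
  destruct Hlam as [d [Hd Kd]].
  set (lo := Rmax a (t - d)).
  assert (Hlo1 : a <= lo) by apply Rmax_l. assert (Hlo2 : t - d <= lo) by apply Rmax_r.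
  assert (Hlot : lo < t) by (apply Rmax_lub_lt; lra).
  assert (VC : forall y, I y -> lo < y < t -> Rabs (vf y - vf t) <= 2 * e').
  { intros y Iy Hy. apply (vclose lo t (vf t) e'); auto.
    - apply I_le; auto.
    - intros s Ks Hs. apply Kd; auto; lra. }
  destruct (rho_dense t It Er Hat lo Hlot) as [s1 [Is1 [Hs1 Hs2]]].
  exists (t - s1). split; [lra|]. intros x Hx.
  rewrite (g_I t It).
  destruct (Req_dec x t) as [Ex|Ex].
  { subst. rewrite g_I by auto. rewrite Rminus_diag, Rabs_R0. lra. }
  destruct (classic (I x)) as [Ix|nIx].
  - rewrite g_I by auto. eapply Rle_trans; [apply VC; auto; lra| unfold e'; lra].
  - assert (Hxab : a <= x <= b) by (destruct (I_le s1 Is1); destruct (I_le t It); lra).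
    destruct (gap_struct x Hxab nIx) as [Iu [Hux [Hxs Hmax]]].
    set (u := rr x) in *.
    assert (Hsu1 : s1 <= u) by (apply Hmax; auto; lra).
    destruct (rho_dense t It Er Hat u) as [y [Iy [Hy1 Hy2]]]; [lra|].
    assert (Hsu : Defs.sigma I u <= y) by (apply sig_next; auto).
    rewrite g_gapx by auto. fold u.
    replace e with (4 * (2 * e')) by (unfold e'; lra).
    apply gapf_bound; [lra|lra| | |].
    + apply VC; auto; lra.
    + apply VC; [apply sig_I; auto| lra].
    + apply Rlt_le, Rlt_le_trans with e'; [|lra]. apply Kd; [apply kappa_lt; auto; destruct (I_le t It); lra|].
      lra.
Qed.

Lemma RC_rs t : I t -> t < Defs.sigma I t -> RC g t.
Proof.
  intros It Hs. apply RC_of with (p := gapf t) (d := Defs.sigma I t - t); [lra| |apply gapf_cont; auto].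
  intros x Hx. apply g_gap; auto; lra.
Qed.

Lemma LC_ls t : I t -> Defs.rho I t < t -> LC g t.
Proof.
  intros It Hr. assert (Ip := rho_I t It). assert (Es := sig_rho t It Hr).
  apply LC_of with (p := gapf (Defs.rho I t)) (d := t - Defs.rho I t); [lra| |].
  - intros x Hx. apply g_gap; auto; rewrite Es; lra.
  - apply gapf_cont. rewrite Es; auto.
Qed.

Lemma LC_a : LC g a.
Proof.
  intros e He. exists 1. split; [lra|]. intros x Hx.
  assert (E : g x = vf a).
  { destruct (Req_dec x a). { subst. apply g_I, I_a. }
    unfold g. destruct (Rlt_dec x a); auto. lra. }
  rewrite E, (g_I a I_a), Rminus_diag, Rabs_R0. lra.
Qed.

Lemma RC_b : RC g b.
Proof.
  intros e He. exists 1. split; [lra|]. intros x Hx.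
  assert (E : g x = vf b).
  { destruct (Req_dec x b). { subst. apply g_I, I_b. }
    unfold g. destruct (Rlt_dec x a); [lra|]. destruct (Rlt_dec b x); auto. lra. }
  rewrite E, (g_I b I_b), Rminus_diag, Rabs_R0. lra.
Qed.

Lemma cont_g z : cont g z.
Proof.
  destruct (Rlt_dec z a) as [Hza|Hza].
  - intros e He. exists (a - z). split; [lra|]. intros x Hx. apply Rabs_lt_between in Hx.
    unfold g. destruct (Rlt_dec x a); [|lra]. destruct (Rlt_dec z a); [|lra].
    rewrite Rminus_diag, Rabs_R0. lra.
  - destruct (Rlt_dec b z) as [Hbz|Hbz].
    + intros e He. exists (z - b). split; [lra|]. intros x Hx. apply Rabs_lt_between in Hx.
      unfold g. destruct (Rlt_dec x a); [lra|]. destruct (Rlt_dec z a); [lra|].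
      destruct (Rlt_dec b x); [|lra]. destruct (Rlt_dec b z); [|lra].
      rewrite Rminus_diag, Rabs_R0. lra.
    + destruct (classic (I z)) as [Iz|nIz].
      * apply LC_RC_cont.
        -- destruct (Req_dec z a) as [E|E]; [subst; apply LC_a|].
           destruct (Req_dec (Defs.rho I z) z) as [Er|Er].
           ++ apply LC_ld; auto; lra.
           ++ apply LC_ls; auto. assert (H := rho_le z Iz). lra.
        -- destruct (Req_dec z b) as [E|E]; [subst; apply RC_b|].
           destruct (Req_dec (Defs.sigma I z) z) as [Es|Es].
           ++ apply RC_rd; auto; lra.
           ++ apply RC_rs; auto. assert (H := sig_ge z Iz). lra.
      * assert (Hzab : a <= z <= b) by lra.
        destruct (gap_struct z Hzab nIz) as [Iu [Hux [Hxs _]]].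
        set (u := rr z) in *.
        assert (Hc := gapf_cont u (Rlt_trans _ _ _ Hux Hxs) z).
        apply LC_RC_cont.
        -- apply LC_of with (p := gapf u) (d := z - u); [lra| |auto].
           intros x Hx. apply g_gap; auto; lra.
        -- apply RC_of with (p := gapf u) (d := Defs.sigma I u - z); [lra| |auto].
           intros x Hx. apply g_gap; auto; lra.
Qed.

Lemma minusR (x y : R) : minus x y = x - y. Proof. reflexivity. Qed.
Lemma plusR (x y : R) : plus x y = x + y. Proof. reflexivity. Qed.
Lemma scalR (x y : R) : scal x y = x * y. Proof. reflexivity. Qed.
Lemma oppR (x : R) : opp x = - x. Proof. reflexivity. Qed.

Lemma gcont z : continuous g z.
Proof. apply continuity_pt_filterlim. apply cont_pt, cont_g. Qed.

Lemma ex_g p q : ex_RInt g p q.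
Proof. apply (@ex_RInt_continuous R_CompleteNormedModule). intros z _. apply gcont. Qed.

Lemma chas p q : RInt g a q - RInt g a p = RInt g p q.
Proof.
  rewrite <- (RInt_Chasles g a p q (ex_g a p) (ex_g p q)). rewrite plusR. ring.
Qed.

Lemma ibound p q c e : p <= q -> (forall x, p <= x <= q -> Rabs (g x - c) <= e) ->
  Rabs (RInt g p q - c * (q - p)) <= e * (q - p).
Proof.
  intros Hpq Hbd.
  assert (E : RInt (fun x => g x - c) p q = minus (RInt g p q) (RInt (fun _ => c) p q)).
  { apply (RInt_minus g (fun _ => c)); [apply ex_g| apply ex_RInt_const]. }
  rewrite RInt_const, minusR, scalR in E.
  assert (E2 : RInt (fun x => g x - c) p q = RInt g p q - (q - p) * c) by exact E.
  assert (E3 : RInt g p q - c * (q - p) = RInt (fun x => g x - c) p q) by (rewrite E2; ring).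
  rewrite E3.
  rewrite Rmult_comm. apply abs_RInt_le_const; auto.
  apply (ex_RInt_minus g (fun _ => c)); [apply ex_g| apply ex_RInt_const].
Qed.

Definition Pr u x := let w := Defs.sigma I u in let th := (x - u) / (w - u) in
  let A := vf u in let B := vf w in
  (w - u) * (A * th + (B - A) * th ^ 2 / 2 + (f u - (A + B) / 2) * (3 * th ^ 2 - 2 * th ^ 3)).

Lemma gap_int u : I u -> u < Defs.sigma I u -> RInt g u (Defs.sigma I u) = f u * (Defs.sigma I u - u).
Proof.
  intros Iu Hu.
  rewrite (RInt_ext g (gapf u)).
  2:{ intros x Hx. rewrite Rmin_left in Hx by lra. rewrite Rmax_right in Hx by lra. apply g_gap; auto; lra. }
  assert (HI : is_RInt (gapf u) u (Defs.sigma I u) (minus (Pr u (Defs.sigma I u)) (Pr u u))).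
  { apply (@is_RInt_derive R_CompleteNormedModule).
    - intros x _. unfold Pr, gapf. cbv zeta. auto_derive; [lra|]. match goal with |- ?A = ?B => change (@eq R A B) end. field. lra.
    - intros x _. apply continuity_pt_filterlim. apply cont_pt, gapf_cont; auto. }
  rewrite (is_RInt_unique _ _ _ _ HI), minusR. match goal with |- ?A = ?B => change (@eq R A B) end.
  unfold Pr. cbv zeta.
  rewrite Rdiv_diag by lra. unfold Rdiv. rewrite Rminus_diag. field; lra.
Qed.

Lemma antideriv : is_delta_antideriv I f (fun x => RInt g a x).
Proof.
  intros t Kt. assert (It := kappa_I t Kt). intros e He.
  destruct (Req_dec (Defs.sigma I t) t) as [Es|Es].
  - destruct (cont_g t e He) as [d [Hd Kd]]. exists d. split; auto. intros s Is Hs.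
    rewrite Es, chas. rewrite (g_I t It), vf_rd in Kd by auto.
    destruct (Rle_dec s t) as [Hst|Hst].
    + rewrite (Rabs_right (t - s)) by lra. apply ibound; auto.
      intros x Hx. apply Kd. apply Rabs_lt_between in Hs. apply Rabs_lt_between. lra.
    + rewrite <- (opp_RInt_swap g t s (ex_g t s)), oppR.
      rewrite (Rabs_left (t - s)) by lra.
      replace (- RInt g t s - f t * (t - s)) with (- (RInt g t s - f t * (s - t))) by ring.
      rewrite Rabs_Ropp. replace (- (t - s)) with (s - t) by ring. apply ibound; [lra|].
      intros x Hx. apply Kd. apply Rabs_lt_between in Hs. apply Rabs_lt_between. lra.
  - assert (Hg := sig_ge t It). set (mu := Defs.sigma I t - t).
    assert (Hmu : 0 < mu) by (unfold mu; lra).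
    destruct (cont_g t 1 ltac:(lra)) as [d0 [Hd0 K0]].
    set (M := Rabs (g t) + 1 + Rabs (f t)).
    assert (HM : 0 <= M) by (unfold M; generalize (Rabs_pos (g t)) (Rabs_pos (f t)); lra).
    set (k := e * mu / (M + 1)). assert (Hk : 0 < k) by (unfold k; apply Rdiv_lt_0_compat; [nra|lra]).
    assert (Hkk : k * (M + 1) = e * mu) by (unfold k; field; lra).
    exists (Rmin d0 (Rmin mu k)). split; [repeat apply Rmin_pos; lra|].
    intros s Is Hs.
    assert (H1 : Rabs (s - t) < d0) by (eapply Rlt_le_trans; [exact Hs| apply Rmin_l]).
    assert (H2 : Rabs (s - t) < mu) by (eapply Rlt_le_trans; [exact Hs| eapply Rle_trans; [apply Rmin_r| apply Rmin_l]]).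
    assert (H3 : Rabs (s - t) < k) by (eapply Rlt_le_trans; [exact Hs| eapply Rle_trans; [apply Rmin_r| apply Rmin_r]]).
    assert (Hst : s <= t).
    { apply Rnot_lt_le; intro Hl. assert (Defs.sigma I t <= s) by (apply sig_next; auto).
      rewrite Rabs_right in H2 by lra. unfold mu in H2. lra. }
    rewrite Rabs_left1 in H1, H2, H3 by lra.
    rewrite chas. rewrite <- (RInt_Chasles g s t (Defs.sigma I t) (ex_g _ _) (ex_g _ _)), plusR.
    rewrite gap_int by (auto; lra).
    replace (RInt g s t + f t * (Defs.sigma I t - t) - f t * (Defs.sigma I t - s)) with
      (RInt g s t - f t * (t - s)) by ring.
    eapply Rle_trans. { apply (ibound s t (f t) M Hst). intros x Hx.
      assert (Hx' : Rabs (x - t) < d0) by (rewrite Rabs_left1 by lra; lra).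
      specialize (K0 x Hx').
      replace (g x - f t) with ((g x - g t) + g t - f t) by ring.
      eapply Rle_trans; [apply Rabs_triang|]. eapply Rle_trans; [apply Rplus_le_compat_r, Rabs_triang|].
      rewrite Rabs_Ropp. unfold M. lra. }
    rewrite Rabs_right by lra.
    assert (M * (t - s) <= M * k) by (apply Rmult_le_compat_l; lra).
    unfold mu in Hkk. nra.
Qed.

End Constr.

Lemma exists_antideriv f : rd_continuous I f -> exists F, is_delta_antideriv I f F.
Proof. intros H. eexists. apply (antideriv f H). Qed.

End TS.

Lemma Mono T a b : time_scale T -> T a -> T b -> a < b -> forall H h,
  (forall t, kappa (interval_ts T a b) t -> has_delta_deriv (interval_ts T a b) H t (h t)) ->
  (forall t, kappa (interval_ts T a b) t -> 0 <= h t) ->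
  forall s t, interval_ts T a b s -> interval_ts T a b t -> s <= t -> H s <= H t.
Proof. intros HT Ha Hb Hab H h Hd Hh s t Is It Hst. eapply (mono T a b); eauto. Qed.

Lemma Flat T a b : time_scale T -> T a -> T b -> a < b -> forall H h,
  (forall t, kappa (interval_ts T a b) t -> has_delta_deriv (interval_ts T a b) H t (h t)) ->
  (forall t, kappa (interval_ts T a b) t -> 0 <= h t) ->
  H a = H b -> forall t, kappa (interval_ts T a b) t -> h t = 0.
Proof. intros HT Ha Hb Hab H h Hd Hh E t Kt. eapply (flat_zero T a b); eauto. Qed.

Lemma Lin T a b F G t c1 c2 al be :
  has_delta_deriv (interval_ts T a b) F t c1 -> has_delta_deriv (interval_ts T a b) G t c2 ->
  has_delta_deriv (interval_ts T a b) (fun x => al * F x + be * G x) t (al * c1 + be * c2).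
Proof. intros. eapply (deriv_lin T a b); eauto. Qed.

Lemma Did T a b t : has_delta_deriv (interval_ts T a b) (fun x => x) t 1.
Proof. apply (deriv_id T a b). Qed.

Lemma Exist T a b f : time_scale T -> T a -> T b -> a < b ->
  rd_continuous (interval_ts T a b) f -> exists F, is_delta_antideriv (interval_ts T a b) f F.
Proof. intros. eapply (exists_antideriv T a b); eauto. Qed.

Lemma Const T a b : time_scale T -> T a -> T b -> a < b -> forall H,
  (forall t, kappa (interval_ts T a b) t -> has_delta_deriv (interval_ts T a b) H t 0) -> H a = H b.
Proof.
  intros HT Ha Hb Hab H Hd. assert (Ia : interval_ts T a b a) by (split; auto; lra).
  assert (Ib : interval_ts T a b b) by (split; auto; lra).
  apply Rle_antisym.
  - apply (Mono T a b HT Ha Hb Hab H (fun _ => 0)); auto; intros; lra.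
  - assert (K := Mono T a b HT Ha Hb Hab (fun x => -1 * H x + 0 * H x) (fun _ => -1 * 0 + 0 * 0)).
    assert (-1 * H a + 0 * H a <= -1 * H b + 0 * H b); [|lra].
    apply K; auto; try (intros; cbv beta; lra). intros t Kt. cbv beta. apply Lin; auto.
Qed.

Lemma phi_cont_pos y : 0 < y -> forall e, 0 < e -> exists d, 0 < d /\
  forall x, 0 < x -> Rabs (x - y) < d -> Rabs (x * ln x - y * ln y) < e.
Proof.
  intros Hy e He.
  assert (Hc : continuous (fun x => x * ln x) y).
  { apply (@ex_derive_continuous R_AbsRing R_NormedModule). auto_derive. lra. }
  apply continuity_pt_filterlim in Hc. apply pt_cont in Hc.
  destruct (Hc (e / 2)) as [d [Hd K]]; [lra|]. exists d. split; auto. intros x _ Hx.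
  specialize (K x Hx). simpl in K. lra.
Qed.

Lemma xlnx_bound x : 0 < x < 1 -> Rabs (x * ln x) <= 2 * sqrt x.
Proof.
  intros Hx. set (r := sqrt x). assert (Hr : 0 < r) by (apply sqrt_lt_R0; lra).
  assert (Ex : x = r * r) by (unfold r; rewrite sqrt_sqrt; lra).
  assert (Hln : ln x = 2 * ln r) by (rewrite Ex, ln_mult by lra; ring).
  assert (H1 : 1 + ln (/ r) <= exp (ln (/ r))) by apply exp_ineq1_le.
  rewrite exp_ln in H1 by (apply Rinv_0_lt_compat; lra). rewrite ln_Rinv in H1 by lra.
  assert (H2 : 1 + ln x <= exp (ln x)) by apply exp_ineq1_le. rewrite exp_ln in H2 by lra.
  assert (Hlx : ln x <= 0) by lra.
  rewrite Rabs_left1 by nra.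
  assert (Hri : r * / r = 1) by (field; lra).
  assert (H3 : r * (- ln r) <= r * (/ r - 1)) by (apply Rmult_le_compat_l; lra).
  rewrite Hln, Ex. nra.
Qed.

Lemma phi_cont0 e : 0 < e -> exists d, 0 < d /\ forall x, 0 < x -> x < d -> Rabs (x * ln x) < e.
Proof.
  intros He. exists (Rmin 1 ((e / 2) * (e / 2))). split; [apply Rmin_pos; nra|].
  intros x Hx Hxd. assert (Rmin 1 ((e / 2) * (e / 2)) <= 1) by apply Rmin_l.
  assert (Rmin 1 ((e / 2) * (e / 2)) <= (e / 2) * (e / 2)) by apply Rmin_r.
  eapply Rle_lt_trans; [apply xlnx_bound; lra|].
  assert (Hs : sqrt x < e / 2).
  { apply Rnot_le_lt; intro Hl. assert (Ex : sqrt x * sqrt x = x) by (apply sqrt_sqrt; lra).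
    assert (e / 2 * (e / 2) <= sqrt x * sqrt x) by (apply Rmult_le_compat; lra). lra. }
  lra.
Qed.

Lemma rd_phi T a b f : rd_continuous (interval_ts T a b) f ->
  (forall t, kappa (interval_ts T a b) t -> 0 < f t) ->
  rd_continuous (interval_ts T a b) (fun t => f t * ln (f t)).
Proof.
  intros Hrd Hpos t Kt. destruct (Hrd t Kt) as [HR HL]. split.
  - intros Er e He. destruct (phi_cont_pos (f t) (Hpos t Kt) e He) as [d1 [Hd1 K1]].
    destruct (HR Er d1 Hd1) as [d [Hd K]]. exists d. split; [auto|]. intros s Ks Hs.
    apply K1; auto.
  - intros El. destruct (HL El) as [L HLp].
    destruct (Rlt_dec 0 L) as [HLpos|HLneg].
    + exists (L * ln L). intros e He. destruct (phi_cont_pos L HLpos e He) as [d1 [Hd1 K1]].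
      destruct (HLp d1 Hd1) as [d [Hd K]]. exists d. split; [auto|]. intros s Ks Hs. apply K1; auto.
    + exists 0. intros e He. destruct (phi_cont0 e He) as [d1 [Hd1 K1]].
      destruct (HLp d1 Hd1) as [d [Hd K]]. exists d. split; [auto|]. intros s Ks Hs.
      rewrite Rminus_0_r. apply K1; auto. specialize (K s Ks Hs). apply Rabs_lt_between in K. lra.
Qed.

Lemma tangent y m : 0 < y -> 0 < m -> 0 <= y * ln y - (ln m + 1) * y + m /\
  (y * ln y - (ln m + 1) * y + m = 0 -> y = m).
Proof.
  intros Hy Hm. set (z := m / y). assert (Hz : 0 < z) by (unfold z; apply Rdiv_lt_0_compat; auto).
  assert (Ez : ln z = ln m - ln y) by (unfold z, Rdiv; rewrite ln_mult, ln_Rinv by (auto; apply Rinv_0_lt_compat; auto); ring).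
  assert (Ezy : z * y = m) by (unfold z; field; lra).
  assert (H1 : 1 + ln z <= exp (ln z)) by apply exp_ineq1_le. rewrite exp_ln in H1 by auto.
  split.
  - assert (y * (1 + ln z) <= y * z) by (apply Rmult_le_compat_l; lra). rewrite Ez in H. nra.
  - intros E. destruct (Req_dec (ln z) 0) as [E0|E0].
    + assert (z = 1) by (rewrite <- (exp_ln z) by auto; rewrite E0; apply exp_0).
      rewrite <- Ezy, H. ring.
    + exfalso. assert (H2 : 1 + ln z < exp (ln z)) by (apply exp_ineq1; auto). rewrite exp_ln in H2 by auto.
      assert (y * (1 + ln z) < y * z) by (apply Rmult_lt_compat_l; lra). rewrite Ez in H. nra.
Qed.

Theorem corollary2p13 (T : R -> Prop) (a b : R) (f : R -> R) :
  time_scale T -> T a -> T b -> a < b ->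
  rd_continuous (interval_ts T a b) f ->
  (forall t, kappa (interval_ts T a b) t -> 0 < f t) ->
  delta_integral (interval_ts T a b) (fun t => f t * ln (f t)) a b >=
    delta_integral (interval_ts T a b) f a b *
      ln (/ (b - a) * delta_integral (interval_ts T a b) f a b) /\
  (delta_integral (interval_ts T a b) (fun t => f t * ln (f t)) a b =
    delta_integral (interval_ts T a b) f a b *
      ln (/ (b - a) * delta_integral (interval_ts T a b) f a b) <->
   exists c, forall t, kappa (interval_ts T a b) t -> f t = c).
Proof.
  intros HT Ha Hb Hab Hrd Hpos.
  set (I := interval_ts T a b).
  assert (Ia : I a) by (split; auto; lra). assert (Ib : I b) by (split; auto; lra).
  assert (Ka : kappa I a). { split; auto. intros [H _]. specialize (H b Ib). lra. }
  unfold delta_integral. cbv zeta.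
  set (F := epsilon (inhabits (fun _ : R => 0)) (is_delta_antideriv I f)).
  set (G := epsilon (inhabits (fun _ : R => 0)) (is_delta_antideriv I (fun t => f t * ln (f t)))).
  assert (HF : is_delta_antideriv I f F) by (apply epsilon_spec, Exist; auto).
  assert (HG : is_delta_antideriv I (fun t => f t * ln (f t)) G)
    by (apply epsilon_spec, Exist; auto; apply rd_phi; auto).
  set (D1 := F b - F a). set (D2 := G b - G a).
  assert (HD1 : 0 < D1).
  { assert (F a <= F b) by (apply (Mono T a b HT Ha Hb Hab F f); auto; [intros t Kt; apply Rlt_le; auto|lra]).
    destruct H as [|E]; [unfold D1; lra|]. exfalso.
    assert (f a = 0) by (apply (Flat T a b HT Ha Hb Hab F f); auto; intros t Kt; apply Rlt_le; auto).
    specialize (Hpos a Ka). lra. }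
  set (m := / (b - a) * D1).
  assert (Hm : 0 < m) by (unfold m; apply Rmult_lt_0_compat; auto; apply Rinv_0_lt_compat; lra).
  assert (Hmb : m * (b - a) = D1) by (unfold m; field; lra).
  set (be := - (ln m + 1)).
  set (K := fun x => 1 * (1 * G x + be * F x) + m * x).
  set (k := fun t => 1 * (1 * (f t * ln (f t)) + be * f t) + m * 1).
  assert (HK : forall t, kappa I t -> has_delta_deriv I K t (k t)).
  { intros t Kt. unfold K, k. apply Lin; [apply Lin; auto| apply Did]. }
  assert (Hk : forall t, kappa I t -> 0 <= k t /\ (k t = 0 -> f t = m)).
  { intros t Kt. unfold k, be. destruct (tangent (f t) m (Hpos t Kt) Hm) as [T1 T2].
    split; [lra|]. intros E. apply T2. lra. }
  assert (EK : K b - K a = D2 - D1 * ln m).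
  { assert (Hmb' : m * b = m * a + (F b - F a)) by (unfold D1 in Hmb; nra).
    unfold K, D1, D2, be. rewrite Hmb'. ring. }
  assert (Kab : K a <= K b) by (apply (Mono T a b HT Ha Hb Hab K k); auto; [intros t Kt; apply Hk; auto|lra]).
  split; [lra|]. split.
  - intros E. exists m. intros t Kt. apply (Hk t Kt).
    apply (Flat T a b HT Ha Hb Hab K k); auto; [intros t0 K0; apply Hk; auto|lra].
  - intros [c Hc].
    assert (Hc0 : forall t, kappa I t -> has_delta_deriv I (fun x => 1 * F x + (- c) * x) t 0).
    { intros t Kt. replace 0 with (1 * f t + (- c) * 1) by (rewrite Hc by auto; ring).
      apply Lin; [auto| apply Did]. }
    assert (E1 := Const T a b HT Ha Hb Hab _ Hc0). simpl in E1.
    assert (Emc : m = c).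
    { assert (D1 = c * (b - a)) by (unfold D1; lra). rewrite <- Hmb in H.
      apply Rmult_eq_reg_r with (b - a); lra. }
    assert (HK0 : forall t, kappa I t -> has_delta_deriv I K t 0).
    { intros t Kt. replace 0 with (k t); [auto|].
      apply Rle_antisym; [|apply Hk; auto].
      unfold k, be. rewrite Hc, <- Emc by auto. lra. }
    assert (E2 := Const T a b HT Ha Hb Hab K HK0). lra.
Qed.
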